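(* Let $Y$ be a simplicial complex with the property that each $1$-simplex is contained in a $2$-simplex. Then the natural chain map $L_\bullet(Y)\to\Delta_\bullet(Y)$ induces an isomorphism $H_1(L_\bullet(Y))\cong H_1(\Delta_\bullet(Y))$.
   Context: For a simplicial complex $Y$: $L_n(Y)$ is the free abelian group on ordered $(n+1)$-tuples $(y_0,\ldots,y_n)$ of pairwise distinct vertices such that $\{y_0,\ldots,y_n\}$ is an $n$-simplex of $Y$; $\Delta_n(Y)$ (the ordered chain complex) is the free abelian group on ordered $(n+1)$-tuples $(y_0,\ldots,y_n)$ of vertices (repetitions allowed) such that $\{y_0,\ldots,y_n\}$ is a simplex of $Y$. Both carry the differential $d(y_0,\ldots,y_n)=\sum_{i=0}^n(-1)^i(y_0,\ldots,\widehat{y_i},\ldots,y_n)$, and the chain map $L_\bullet(Y)\to\Delta_\bullet(Y)$ is the inclusion on basis elements. *)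

(* Defs.v *)
From HB Require Import structures.
From mathcomp Require Import all_boot all_order all_algebra.
From mathcomp Require Import finmap.
From mathcomp Require Import freeg.

Set Implicit Arguments.
Unset Strict Implicit.
Unset Printing Implicit Defensive.

Import Order.TTheory GRing.Theory Num.Theory.
Local Open Scope ring_scope.
Local Open Scope fset_scope.

Record simplicial_complex (V : choiceType) := SimplicialComplex {
  simplex : {fset V} -> Prop;
  simplex_neq0 : forall s, simplex s -> s != fset0;
  simplex_sub : forall s s', simplex s -> s' `<=` s -> s' != fset0 -> simplex s'
}.

Definition is_nsimplex (V : choiceType) (Y : simplicial_complex V) (n : nat)
  (s : {fset V}) : Prop := simplex Y s /\ #|` s| = n.+1.

Definition L_basis (V : choiceType) (Y : simplicial_complex V) (n : nat)
  (t : seq V) : Prop :=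
  size t = n.+1 /\ uniq t /\ is_nsimplex Y n [fset x | x in t].

Definition Delta_basis (V : choiceType) (Y : simplicial_complex V) (n : nat)
  (t : seq V) : Prop :=
  size t = n.+1 /\ simplex Y [fset x | x in t].

(* Both L_n(Y) and Delta_n(Y) are realised inside the free abelian group on
   all finite sequences of vertices, as the subgroups of chains supported on
   the respective bases.  The chain map L -> Delta is then the inclusion. *)
Definition chain (V : choiceType) := {freeg (seq V) / int}.

Definition supported_on (V : choiceType) (B : seq V -> Prop) (c : chain V) :=
  forall t, coeff t c != 0 -> B t.

Definition Lchain (V : choiceType) (Y : simplicial_complex V) n (c : chain V) :=
  supported_on (L_basis Y n) c.
Definition Dchain (V : choiceType) (Y : simplicial_complex V) n (c : chain V) :=
  supported_on (Delta_basis Y n) c.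

Definition face (V : choiceType) (i : nat) (t : seq V) : seq V :=
  take i t ++ drop i.+1 t.

Definition bd_basis (V : choiceType) (t : seq V) : chain V :=
  \sum_(i < size t) << ((-1) ^+ i : int) *g face i t >>.

Definition bd (V : choiceType) (c : chain V) : chain V :=
  fglift (@bd_basis V) c.

Definition Lcycle1 (V : choiceType) (Y : simplicial_complex V) (z : chain V) :=
  Lchain Y 1 z /\ bd z = 0.
Definition Dcycle1 (V : choiceType) (Y : simplicial_complex V) (z : chain V) :=
  Dchain Y 1 z /\ bd z = 0.
Definition Lbound1 (V : choiceType) (Y : simplicial_complex V) (z : chain V) :=
  exists b, Lchain Y 2 b /\ z = bd b.
Definition Dbound1 (V : choiceType) (Y : simplicial_complex V) (z : chain V) :=
  exists b, Dchain Y 2 b /\ z = bd b.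

(* The map H_1(L(Y)) -> H_1(Delta(Y)), [z] |-> [z], induced by the inclusion,
   is injective and surjective (hence a group isomorphism, being additive).
   H_1 = Z_1 / B_1, and this unfolds bijectivity of the induced map. *)
Definition H1_incl_injective (V : choiceType) (Y : simplicial_complex V) :=
  forall z, Lcycle1 Y z -> Dbound1 Y z -> Lbound1 Y z.
Definition H1_incl_surjective (V : choiceType) (Y : simplicial_complex V) :=
  forall z, Dcycle1 Y z -> exists w, Lcycle1 Y w /\ Dbound1 Y (z - w).
Definition H1_incl_iso (V : choiceType) (Y : simplicial_complex V) :=
  H1_incl_injective Y /\ H1_incl_surjective Y.

(* Main.v *)
From HB Require Import structures.
Require Import Defs.
From mathcomp Require Import all_boot all_order all_algebra finmap freeg.
From mathcomp Require Import ring.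
Set Implicit Arguments.
Unset Strict Implicit.
Unset Printing Implicit Defensive.
Import Order.TTheory GRing.Theory Num.Theory.
Local Open Scope fset_scope.

Section Aux.
Local Open Scope ring_scope.
Variable V : choiceType.
Notation C := (chain V).

Definition flift (f : seq V -> C) : C -> C := fglift f.
HB.instance Definition _ (f : seq V -> C) :=
  GRing.isAdditive.Build C C (flift f) (lift_is_additive f).

Lemma scaleE (k : int) (X : C) : k *: X = X *~ k.
Proof.
apply/eqP/freeg_eqP => t; rewrite coeffZ.
by rewrite (raddfMz (coeff t)) mulrzz mulrC.
Qed.

Lemma fliftU (f : seq V -> C) k s : fglift f << k *g s >> = f s *~ k.
Proof. by rewrite liftU scaleE. Qed.

Lemma fliftE (f : seq V -> C) (D : C) : fglift f D = \sum_(s <- dom D) f s *~ coeff s D.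
Proof.
rewrite -{1}[D]freeg_sumE.
have -> : fglift f (\sum_(z <- dom D) << coeff z D *g z >>) =
   flift f (\sum_(z <- dom D) << coeff z D *g z >>) by [].
rewrite raddf_sum; apply: eq_bigr => s _.
exact: fliftU.
Qed.

Lemma chainE (D : C) : D = \sum_(s <- dom D) << s >> *~ coeff s D.
Proof.
rewrite -{1}[D]freeg_sumE; apply: eq_bigr => s _.
by rewrite freeg_mulz intz.
Qed.

Lemma coeff_flift (f : seq V -> C) (D : C) t :
  coeff t (fglift f D) != 0 -> exists2 s, s \in dom D & coeff t (f s) != 0.
Proof.
rewrite fliftE raddf_sum => H.
case: (boolP (has (fun s => coeff t (f s) != 0) (dom D))) => [/hasP //|/hasPn Hn].
move: H; rewrite big1_seq ?eqxx // => s /= hs.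
by rewrite raddfMz /=; move: (Hn s hs); rewrite negbK => /eqP ->; rewrite mul0rz.
Qed.

Lemma flift_ext (f g : seq V -> C) (D : C) :
  (forall s, s \in dom D -> f s = g s) -> fglift f D = fglift g D.
Proof.
move=> H; rewrite !fliftE big_seq [RHS]big_seq; apply: eq_bigr => s hs.
by rewrite H.
Qed.

Lemma flift_comp (f g : seq V -> C) (D : C) :
  fglift g (fglift f D) = fglift (fun s => fglift g (f s)) D.
Proof.
rewrite [fglift f D]fliftE [RHS]fliftE.
have -> : fglift g (\sum_(s <- dom D) f s *~ coeff s D) =
   flift g (\sum_(s <- dom D) f s *~ coeff s D) by [].
rewrite raddf_sum; apply: eq_bigr => s _.
by rewrite raddfMz.
Qed.

Lemma flift_id (D : C) : fglift (fun s => << s >>) D = D.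
Proof. by rewrite fliftE [RHS]chainE. Qed.

Lemma fliftB (f g : seq V -> C) (D : C) :
  fglift f D - fglift g D = fglift (fun s => f s - g s) D.
Proof.
rewrite !fliftE -sumrB; apply: eq_bigr => s _.
by rewrite mulrzBl.
Qed.

Lemma bdD (X Y : C) : bd (X + Y) = bd X + bd Y.
Proof. exact: (raddfD (flift (@bd_basis V))). Qed.
Lemma bd0 : bd (0 : C) = 0.
Proof. exact: (raddf0 (flift (@bd_basis V))). Qed.
Lemma bdMz (X : C) k : bd (X *~ k) = bd X *~ k.
Proof. exact: (raddfMz (flift (@bd_basis V))). Qed.
Lemma bdU (s : seq V) : bd << s >> = bd_basis s.
Proof. by rewrite /bd fliftU mulr1z. Qed.

Lemma bd_basis2 (a b : V) : bd_basis [:: a; b] = << [:: b] >> - << [:: a] >>.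
Proof.
rewrite /bd_basis /= !big_ord_recl big_ord0 /face /= addr0.
by rewrite expr1 freegUN.
Qed.

Lemma bd_basis3 (a b c : V) :
  bd_basis [:: a; b; c] = << [:: b; c] >> - << [:: a; c] >> + << [:: a; b] >>.
Proof.
rewrite /bd_basis /= !big_ord_recl big_ord0 /face /= addr0.
by rewrite expr1 freegUN sqrrN expr1n addrA.
Qed.

Definition supp_add (B : seq V -> Prop) (X Y : C) :
  supported_on B X -> supported_on B Y -> supported_on B (X + Y).
Proof.
move=> hX hY t; rewrite coeffD.
case: (eqVneq (coeff t X) 0) => [->|/hX //]; rewrite add0r; exact: hY.
Qed.

Lemma supp0 (B : seq V -> Prop) : supported_on B 0.
Proof. by move=> t; rewrite coeff0 eqxx. Qed.

Lemma suppMz (B : seq V -> Prop) (X : C) k : supported_on B X -> supported_on B (X *~ k).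
Proof.
move=> hX t; rewrite raddfMz /=; case: (eqVneq (coeff t X) 0) => [->|/hX //].
by rewrite mul0rz eqxx.
Qed.

Lemma suppU (B : seq V -> Prop) s : B s -> supported_on B << s >>.
Proof.
move=> hs t; rewrite coeffU mul1r; case: (eqVneq s t) => [<- //|].
by rewrite eqxx.
Qed.

Definition psib (s : seq V) : C := if uniq s then << s >> else 0.
Definition psi (X : C) : C := fglift psib X.

Lemma psib2 (x y : V) : psib [:: x; y] = if x == y then 0 else << [:: x; y] >>.
Proof. by rewrite /psib /= inE andbT; case: eqP. Qed.

Lemma psiU (s : seq V) : psi << s >> = psib s.
Proof. by rewrite /psi fliftU mulr1z. Qed.
Lemma psiD (X Y : C) : psi (X + Y) = psi X + psi Y.
Proof. exact: (raddfD (flift psib)). Qed.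
Lemma psiB (X Y : C) : psi (X - Y) = psi X - psi Y.
Proof. exact: (raddfB (flift psib)). Qed.

Lemma card_uniq (t : seq V) : uniq t -> #|` [fset x | x in t]| = size t.
Proof. by move=> u; rewrite card_fseq undup_id. Qed.

Lemma zmod_aux (X Y Z W : C) : X - Y + Z + (Y - X + W) = W - 0 + Z.
Proof.
apply/eqP/freeg_eqP => t; rewrite !(coeffD, coeffB, coeff0).
ring.
Qed.

Lemma key (Y : simplicial_complex V)
  (hY : forall s, is_nsimplex Y 1 s ->
        exists s', is_nsimplex Y 2 s' /\ s `<=` s') t :
  Delta_basis Y 2 t -> exists q, Lchain Y 2 q /\ bd q = psi (bd_basis t).
Proof.
case: t => [|a [|b [|c [|? ?]]]] [//= _ hs].
rewrite bd_basis3 psiD psiB !psiU !psib2.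
case: (eqVneq a b) => [<-|ab].
  by exists 0; split; [exact: supp0|]; rewrite bd0 subrr addr0.
case: (eqVneq b c) => [<-|bc].
  by exists 0; split; [exact: supp0|]; rewrite bd0 ?eqxx ?(negbTE ab) sub0r addNr.
case: (eqVneq a c) => [<-|ac]; last first.
  exists << [:: a; b; c] >>; rewrite ?(negbTE ab) ?(negbTE bc) ?(negbTE ac) bdU bd_basis3.
  split=> //; apply: suppU.
  have u : uniq [:: a; b; c] by rewrite /= !inE negb_or ab ac bc.
  by split=> //; split=> //; split=> //; rewrite card_uniq.
rewrite ?eqxx ?(negbTE ab) ?(eq_sym b a) ?(negbTE ab).
pose s := [fset a; b].
have hs1 : is_nsimplex Y 1 s.
  split; last by rewrite cardfs2 ab.
  apply: (simplex_sub hs).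
    by apply/fsubsetP => x; rewrite !inE => /orP[] ->; rewrite ?orbT.
  by apply/fset0Pn; exists a; rewrite !inE eqxx.
have [s' [[hs' cs'] ss']] := hY s hs1.
have [c' c's' c's] : exists2 c', c' \in s' & c' \notin s.
  apply/fsubsetPn; apply/negP => /fsubset_leq_card.
  by rewrite cs' /s cardfs2 ab.
move: c's; rewrite !inE negb_or => /andP[c'a c'b].
have sub3 x y z : x \in s' -> y \in s' -> z \in s' ->
    L_basis Y 2 [:: x; y; z] \/ ~~ uniq [:: x; y; z].
  move=> hx hy hz; case: (boolP (uniq [:: x; y; z])) => u; last by right.
  left; split=> //; split=> //; split; last by rewrite card_uniq.
  apply: (simplex_sub hs').
    apply/fsubsetP => w; rewrite !inE.
    by case/orP=> [/eqP->//|/orP[/eqP->//|/orP[/eqP->//|//]]].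
  by apply/fset0Pn; exists x; rewrite !inE eqxx.
have as' : a \in s' by apply: (fsubsetP ss'); rewrite !inE eqxx.
have bs' : b \in s' by apply: (fsubsetP ss'); rewrite !inE eqxx orbT.
have ac' : a != c' by rewrite eq_sym.
have bc' : b != c' by rewrite eq_sym.
have ba : b != a by rewrite eq_sym.
have u1 : uniq [:: a; b; c'] by rewrite /= !inE !negb_or ab ac' bc'.
have u2 : uniq [:: b; a; c'] by rewrite /= !inE !negb_or ba ac' bc'.
exists (<< [:: a; b; c'] >> + << [:: b; a; c'] >>); split.
  apply: supp_add; apply: suppU.
    by case: (sub3 _ _ _ as' bs' c's') => //; rewrite u1.
  by case: (sub3 _ _ _ bs' as' c's') => //; rewrite u2.
by rewrite bdD !bdU !bd_basis3 zmod_aux.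
Qed.

Definition chi (s : seq V) : C :=
  if s is [:: x; y] then (if x == y then << [:: x; x; x] >> else 0) else 0.

Lemma psi_id (Y : simplicial_complex V) (X : C) : Lchain Y 1 X -> psi X = X.
Proof.
move=> hX; rewrite /psi -[RHS]flift_id; apply: flift_ext => s.
rewrite mem_dom => /hX [_ [u _]]; by rewrite /psib u.
Qed.
Lemma lemma7p1_aux (Y : simplicial_complex V)
  (hY : forall s, is_nsimplex Y 1 s ->
        exists s', is_nsimplex Y 2 s' /\ s `<=` s') :
  H1_incl_iso Y.
Proof.
split.
- move=> z [hz bz] [b [hb zE]].
  have psiz := psi_id hz.
  have E : psi z = \sum_(t <- dom b) psi (bd_basis t) *~ coeff t b.
    by rewrite zE /psi /bd flift_comp fliftE.
  have ind : forall r, {subset r <= dom b} -> exists p, Lchain Y 2 p /\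
      bd p = \sum_(t <- r) psi (bd_basis t) *~ coeff t b.
    elim=> [|t r IH] sub.
      by exists 0; split; [exact: supp0|]; rewrite bd0 big_nil.
    have [|p [hp bp]] := IH; first by move=> x hx; apply: sub; rewrite inE hx orbT.
    have tb : t \in dom b by apply: sub; rewrite inE eqxx.
    have [q [hq bq]] := key hY (hb t ltac:(by rewrite -mem_dom)).
    exists (q *~ coeff t b + p); split.
      by apply: supp_add => //; apply: suppMz.
    by rewrite bdD bdMz bq bp big_cons.
  have [p [hp bp]] := ind (dom b) (fun x h => h).
  by exists p; split => //; rewrite bp -E psiz.
- move=> z [hz bz]; exists (psi z); split; first split.
  + move=> t /coeff_flift [s sd]; rewrite /psib; case: ifP => us; last by rewrite coeff0 eqxx.
    rewrite coeffU mul1r; case: (eqVneq s t) => [<- _|]; last by rewrite eqxx.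
    have [s2 hs] := hz s ltac:(by rewrite -mem_dom).
    by split=> //; split=> //; split=> //; rewrite card_uniq.
  + rewrite -bz /psi /bd flift_comp; apply: flift_ext => s sd.
    have [s2 hs] := hz s ltac:(by rewrite -mem_dom).
    case: s s2 sd hs => [|x [|y [|? ?]]] //= _ sd hs.
    rewrite psib2; case: (eqVneq x y) => [<-|xy].
      by rewrite bd_basis2 subrr; exact: bd0.
    exact: bdU.
  + exists (fglift chi z); split.
      move=> t /coeff_flift [s sd].
      have [s2 hs] := hz s ltac:(by rewrite -mem_dom).
      case: s s2 sd hs => [|x [|y [|? ?]]] //= _ sd hs.
      case: (eqVneq x y) => [_|]; last by rewrite coeff0 eqxx.
      rewrite coeffU mul1r; case: (eqVneq [:: x; x; x] t) => [<- _|]; last by rewrite eqxx.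
      split=> //; apply: (simplex_sub hs).
        by apply/fsubsetP => w; rewrite !inE => /orP[->|/orP[->|/orP[->|//]]].
      by apply/fset0Pn; exists x; rewrite !inE eqxx.
    rewrite -{1}(flift_id z) /psi fliftB /bd flift_comp; apply: flift_ext => s sd.
    have [s2 hs] := hz s ltac:(by rewrite -mem_dom).
    case: s s2 sd hs => [|x [|y [|? ?]]] //= _ sd hs.
    rewrite psib2; case: (eqVneq x y) => [<-|xy].
      rewrite subr0; have := bdU [:: x; x; x]; rewrite /bd => ->.
      by rewrite bd_basis3 subrr add0r.
    by rewrite subrr; symmetry; exact: bd0.
Qed.
End Aux.

Theorem lemma7p1 (V : choiceType) (Y : simplicial_complex V)
  (hY : forall s, is_nsimplex Y 1 s ->
        exists s', is_nsimplex Y 2 s' /\ s `<=` s') :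
  H1_incl_iso Y.
Proof. exact: lemma7p1_aux. Qed.
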